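(* Let $(V,E,c,p)$ be a PCSTP instance with potential terminals $T_p=\{t_1,\dots,t_s\}$ and let $(V',A',T',c',r')$ be the SAP obtained from it by Transformation 1 (see context), with $M=\sum_{t\in T_p}p(t)$. Let $\tilde{\mathcal U}\subseteq\{U\subset V': r'\notin U,\ U\cap T'\neq\emptyset\}$ and consider the LP $$\min\ c'^Tx-M\quad\text{s.t.}\quad x(\delta^-(U))\ge 1\ \ (U\in\tilde{\mathcal U}),\qquad 0\le x(a)\le 1\ \ (a\in A').$$ Let $\tilde L$ be its optimal value, let $\pi\ge0$ be an optimal dual solution for the constraints indexed by $\tilde{\mathcal U}$, and let $\tilde c(a):=c'(a)-\sum_{U\in\tilde{\mathcal U}:\,a\in\delta^-(U)}\pi_U$ be the reduced costs. Let $B$ be an upper bound on the cost $C$ of an optimal solution of the PCSTP instance. Let $t_i\in T_p$ and let $\bar T_i\subseteq T_p$ be such that, for every optimal solution $S$ of the PCSTP instance, $V(S)\cap\bar T_i\neq\emptyset$ implies $t_i\in V(S)$. If $$\sum_{j:\ t_j\in\bar T_i}\tilde c\big((v_0',t_j')\big)+\tilde L> B,$$ then $t_i$ is contained in every optimal solution of the PCSTP instance.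
   Context: A PCSTP instance $(V,E,c,p)$: finite undirected connected graph, $c:E\to\mathbb{Q}_{>0}$, $p:V\to\mathbb{Q}_{\ge0}$; for a tree $S$ (connected acyclic subgraph with at least one vertex) $C(S):=\sum_{e\in E(S)}c(e)+\sum_{v\in V\setminus V(S)}p(v)$; optimal solutions minimize $C$; $T_p:=\{v:p(v)>0\}$. A Steiner arborescence problem (SAP) $(V',A',T',c',r')$: digraph $(V',A')$, costs $c'\ge0$, terminals $T'$, root $r'\in T'$; for $U\subseteq V'$, $\delta^-(U)$ is the set of arcs entering $U$, and $x(F):=\sum_{a\in F}x(a)$. Transformation 1 (PCSTP to SAP): set $V':=V$, $A':=\{(v,w),(w,v):\{v,w\}\in E\}$ with $c'((v,w)):=c(\{v,w\})$; $M:=\sum_{t\in T_p}p(t)$; add new vertices $r'$ and $v_0'$; for each $i=1,\dots,s$: add arc $(r',t_i)$ of cost $M$, add a new vertex $t_i'$, add arcs $(t_i,v_0')$ and $(t_i,t_i')$ of cost $0$, and add arc $(v_0',t_i')$ of cost $p(t_i)$. Terminals $T':=\{t_1',\dots,t_s'\}\cup\{r'\}$, root $r'$. *)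

(* Defs.v *)
From HB Require Import structures.
From mathcomp Require Import all_boot all_order all_algebra.
Set Implicit Arguments. Unset Strict Implicit. Unset Printing Implicit Defensive.
Import Order.TTheory GRing.Theory Num.Theory.
Local Open Scope ring_scope.

Record PCSTP (V : finType) := Pcstp {
  adj : rel V;
  cst : V -> V -> rat;
  pr  : V -> rat
}.

Definition pcstp_wf (V : finType) (I : PCSTP V) : Prop :=
  [/\ symmetric (adj I), irreflexive (adj I),
      (forall v w, cst I v w = cst I w v),
      (forall v w, adj I v w -> 0 < cst I v w) &
      (forall v, 0 <= pr I v)] /\
  (forall v w, connect (adj I) v w).

(* A tree S = (VS, ES); ES is a set of ordered pairs closed under reversal,
   each undirected edge {v,w} represented by both (v,w) and (w,v). *)
Definition is_tree (V : finType) (I : PCSTP V) (VS : {set V}) (ES : {set V * V}) : Prop :=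
  [/\ VS != set0,
      (forall a, a \in ES -> [/\ adj I a.1 a.2, a.1 \in VS, a.2 \in VS & (a.2, a.1) \in ES]),
      (forall u v, u \in VS -> v \in VS -> connect (fun x y => (x, y) \in ES) u v) &
      ~ (exists s : seq V, [/\ uniq s, 3 <= size s & cycle (fun x y => (x, y) \in ES) s]%N)].

(* C(S): edge costs (each undirected edge counted once) plus prizes of uncovered vertices *)
Definition tree_cost (V : finType) (I : PCSTP V) (VS : {set V}) (ES : {set V * V}) : rat :=
  (\sum_(a in ES) cst I a.1 a.2) / 2%:R + \sum_(v in ~: VS) pr I v.

Definition is_optimal (V : finType) (I : PCSTP V) (VS : {set V}) (ES : {set V * V}) : Prop :=
  is_tree I VS ES /\
  forall VS' ES', is_tree I VS' ES' -> tree_cost I VS ES <= tree_cost I VS' ES'.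

Definition Tp (V : finType) (I : PCSTP V) := {t : V | 0 < pr I t}.

(* V' = V  +  {t_i' : t_i in T_p}  +  {r', v_0'}   (inr true = r', inr false = v_0') *)
Definition V' (V : finType) (I : PCSTP V) : finType := ((V + Tp I) + bool)%type.

Definition orig (V : finType) (I : PCSTP V) (v : V) : V' I := inl (inl v).
Definition tprime (V : finType) (I : PCSTP V) (t : Tp I) : V' I := inl (inr t).
Definition root' (V : finType) (I : PCSTP V) : V' I := inr true.
Definition v0' (V : finType) (I : PCSTP V) : V' I := inr false.

Definition Mbig (V : finType) (I : PCSTP V) : rat := \sum_(t | 0 < pr I t) pr I t.

Definition arcb (V : finType) (I : PCSTP V) (a b : V' I) : bool :=
  match a, b with
  | inl (inl v), inl (inl w) => adj I v w
  | inr true, inl (inl t) => 0 < pr I t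
  | inl (inl t), inr false => 0 < pr I t
  | inl (inl t), inl (inr t') => t == val t'
  | inr false, inl (inr _) => true
  | _, _ => false
  end.

Definition cst' (V : finType) (I : PCSTP V) (a b : V' I) : rat :=
  match a, b with
  | inl (inl v), inl (inl w) => cst I v w
  | inr true, inl (inl t) => Mbig I
  | inl (inl t), inr false => 0
  | inl (inl t), inl (inr t') => 0
  | inr false, inl (inr t') => pr I (val t')
  | _, _ => 0
  end.

Definition arcs (V : finType) (I : PCSTP V) : {set V' I * V' I} :=
  [set a | arcb a.1 a.2].

Definition terminals' (V : finType) (I : PCSTP V) : {set V' I} :=
  [set x | match x with inl (inr _) => true | inr true => true | _ => false end].

Definition delta_in (V : finType) (I : PCSTP V) (U : {set V' I}) : {set V' I * V' I} :=
  [set a in arcs I | (a.2 \in U) && (a.1 \notin U)].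

Definition lp_feasible (V : finType) (I : PCSTP V) (Ut : {set {set V' I}})
    (x : V' I * V' I -> rat) : Prop :=
  (forall U, U \in Ut -> 1 <= \sum_(a in delta_in U) x a) /\
  (forall a, a \in arcs I -> 0 <= x a <= 1).

Definition lp_obj (V : finType) (I : PCSTP V) (x : V' I * V' I -> rat) : rat :=
  \sum_(a in arcs I) cst' a.1 a.2 * x a - Mbig I.

Definition lp_opt_value (V : finType) (I : PCSTP V) (Ut : {set {set V' I}}) (L : rat) : Prop :=
  (exists x, lp_feasible Ut x /\ lp_obj x = L) /\
  (forall x, lp_feasible Ut x -> L <= lp_obj x).

(* LP dual: pi_U >= 0 for the cut constraints, sigma_a >= 0 for x(a) <= 1 *)
Definition dual_feasible (V : finType) (I : PCSTP V) (Ut : {set {set V' I}})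
    (pi : {set V' I} -> rat) (sigma : V' I * V' I -> rat) : Prop :=
  (forall U, U \in Ut -> 0 <= pi U) /\
  (forall a, a \in arcs I -> 0 <= sigma a /\
     \sum_(U in Ut | a \in delta_in U) pi U - sigma a <= cst' a.1 a.2).

Definition dual_obj (V : finType) (I : PCSTP V) (Ut : {set {set V' I}})
    (pi : {set V' I} -> rat) (sigma : V' I * V' I -> rat) : rat :=
  \sum_(U in Ut) pi U - \sum_(a in arcs I) sigma a - Mbig I.

Definition dual_optimal_pi (V : finType) (I : PCSTP V) (Ut : {set {set V' I}})
    (pi : {set V' I} -> rat) : Prop :=
  exists sigma, dual_feasible Ut pi sigma /\
    forall pi' sigma', dual_feasible Ut pi' sigma' ->
      dual_obj Ut pi' sigma' <= dual_obj Ut pi sigma.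

Definition red_cost (V : finType) (I : PCSTP V) (Ut : {set {set V' I}})
    (pi : {set V' I} -> rat) (a : V' I * V' I) : rat :=
  cst' a.1 a.2 - \sum_(U in Ut | a \in delta_in U) pi U.

(* Main.v *)
Require Import Defs.
From HB Require Import structures.
From mathcomp Require Import all_boot all_order all_algebra.
From mathcomp Require Import ring lra zify.
Set Implicit Arguments. Unset Strict Implicit. Unset Printing Implicit Defensive.
Import Order.TTheory GRing.Theory Num.Theory.
Local Open Scope ring_scope.

Section Farkas.
Variable R : realFieldType.
Variable X : finType.

Lemma sum_ind (J : finType) (j : J) (f : J -> R) :
  \sum_k (k == j)%:R * f k = f j.
Proof.
rewrite (bigD1 j) //= eqxx mul1r big1 ?addr0 // => k /negbTE ->; by rewrite mul0r.
Qed.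

Lemma lt_le_asym2 (a : R) : 0 <= a -> a < 0 -> False.
Proof. by move=> H1 H2; move: (le_lt_trans H1 H2); rewrite ltxx. Qed.

Definition incone (J : finType) (A : J -> X -> R) (b : J -> R) (a : X -> R) (c : R) :=
  exists lam : J -> R, (forall j, 0 <= lam j) /\ (forall i, \sum_j lam j * A j i = a i)
     /\ \sum_j lam j * b j = c.

Lemma cone_comb (J J' : finType) A b (A' : J' -> X -> R) b' (mu : J' -> R) :
 (forall j', @incone J A b (A' j') (b' j')) -> (forall j', 0 <= mu j') ->
 incone A b (fun i => \sum_j' mu j' * A' j' i) (\sum_j' mu j' * b' j').
Proof.
move=> H Hmu.
have [lf Hlf] := fin_all_exists H.
exists (fun j => \sum_j' mu j' * lf j' j); split; [|split].
- move=> j; apply: sumr_ge0 => j' _; apply: mulr_ge0 => //; by case: (Hlf j').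
- move=> i; under eq_bigr do rewrite mulr_suml.
  rewrite exchange_big /=; apply: eq_bigr => j' _.
  case: (Hlf j') => _ [<- _]; rewrite mulr_sumr; apply: eq_bigr => j _; by rewrite mulrA.
- under eq_bigr do rewrite mulr_suml.
  rewrite exchange_big /=; apply: eq_bigr => j' _.
  case: (Hlf j') => _ [_ <-]; rewrite mulr_sumr; apply: eq_bigr => j _; by rewrite mulrA.
Qed.

Definition Farkas_concl (J : finType) (S : {set X}) (A : J -> X -> R) (b : J -> R) :=
  exists lam : J -> R, (forall j, 0 <= lam j) /\
    (forall i, i \in S -> \sum_j lam j * A j i = 0) /\ \sum_j lam j * b j < 0.

Lemma farkas_n n : forall (S : {set X}) (J : finType) (A : J -> X -> R) (b : J -> R),
  #|S| = n ->
  (forall x : X -> R, exists j, \sum_(i in S) A j i * x i + b j < 0) ->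
  Farkas_concl S A b.
Proof.
elim: n => [|n IH] S J A b HS Hinf.
  move/eqP: HS; rewrite cards_eq0 => /eqP HS; subst S.
  have [j Hj] := Hinf (fun _ => 0).
  rewrite big_set0 add0r in Hj.
  exists (fun k => (k == j)%:R); split; [|split].
  - by move=> k; rewrite ler0n.
  - by move=> i; rewrite in_set0.
  - by rewrite sum_ind.
have [v Hv] : exists v, v \in S by apply/card_gt0P; rewrite HS.
set S' := S :\ v.
have HS' : #|S'| = n by move: HS; rewrite (cardsD1 v) Hv add1n => -[].
pose J' := ((J * J) + J)%type.
pose cnd (p q : J) := (0 < A p v) && (A q v < 0).
pose A' (k : J') (i : X) : R := match k with
  | inl (p, q) => if cnd p q then (- A q v) * A p i + A p v * A q i else 0
  | inr j => if A j v == 0 then A j i else 0 end.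
pose b' (k : J') : R := match k with
  | inl (p, q) => if cnd p q then (- A q v) * b p + A p v * b q else 0
  | inr j => if A j v == 0 then b j else 0 end.
have Hinf' : forall x : X -> R, exists j, \sum_(i in S') A' j i * x i + b' j < 0.
  move=> x; case: (boolP [exists k, \sum_(i in S') A' k i * x i + b' k < 0]) => [/existsP //| /existsPn Hall]; exfalso.
  have Hall' : forall k, 0 <= \sum_(i in S') A' k i * x i + b' k.
    by move=> k; move: (Hall k); rewrite -leNgt.
  pose r (j : J) := \sum_(i in S') A j i * x i + b j.
  have Hr2 : forall p q, cnd p q -> 0 <= (- A q v) * r p + A p v * r q.
    move=> p q Hc; move: (Hall' (inl (p, q))); rewrite /= Hc.
    have E2 : \sum_(i in S') ((- A q v) * A p i + A p v * A q i) * x i =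
        (- A q v) * \sum_(i in S') A p i * x i + A p v * \sum_(i in S') A q i * x i.
      by rewrite !mulr_sumr -big_split; apply: eq_bigr => i _ /=; rewrite mulrDl !mulrA.
    rewrite E2 => H.
    have E3 : (- A q v) * r p + A p v * r q = (- A q v) * \sum_(i in S') A p i * x i +
       A p v * \sum_(i in S') A q i * x i + ((- A q v) * b p + A p v * b q) by rewrite /r; ring.
    by rewrite E3.
  have Hr1 : forall j, A j v = 0 -> 0 <= r j.
    move=> j Hj; move: (Hall' (inr j)); rewrite /= Hj eqxx //.
  have [t Ht] : exists t, forall j, 0 <= A j v * t + r j.
    case: (boolP [exists p, 0 < A p v]).
      case/existsP => p0 Hp0.
      pose low (p : J) := - r p / A p v.
      case: (@arg_maxP _ _ _ p0 (fun p => 0 < A p v) low Hp0) => ps Hps Hmax.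
      exists (low ps) => j.
      case: (ltrgtP (A j v) 0) => Hj.
      + have := Hr2 ps j (introT andP (conj Hps Hj)).
        rewrite /low.
        have -> : A j v * (- r ps / A ps v) + r j = ((- A j v) * r ps + A ps v * r j) / A ps v.
          by field; rewrite gt_eqF.
        by move=> H; apply: divr_ge0 => //; apply: ltW.
      + have := Hmax j Hj; rewrite /low => H.
        have := ler_wpM2l (ltW Hj) H.
        have -> : A j v * (- r j / A j v) = - r j by field; rewrite gt_eqF.
        lra.
      + by rewrite Hj mul0r add0r; apply: Hr1.
    move/existsPn => Hneg.
    exists (- \sum_k (`|r k| / `|A k v|)) => j.
    case: (ltrgtP (A j v) 0) => Hj.
    + have Hle : `|r j| / `|A j v| <= \sum_k (`|r k| / `|A k v|).
        rewrite (bigD1 j) //= lerDl; apply: sumr_ge0 => k _; by apply: divr_ge0.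
      have Hle' : - \sum_k (`|r k| / `|A k v|) <= - (`|r j| / `|A j v|) by rewrite lerN2.
      have H := ler_wnM2l (ltW Hj) Hle'.
      have E : A j v * - (`|r j| / `|A j v|) = `|r j|.
        rewrite (ltr0_norm Hj); field; by rewrite lt_eqF.
      have Hn : - r j <= `|r j| by rewrite -normrN ler_norm.
      lra.
    + by move: (Hneg j); rewrite Hj.
    + by rewrite Hj mul0r add0r; apply: Hr1.
  pose x' := fun i => if i == v then t else x i.
  have [j Hj] := Hinf x'.
  move: Hj; rewrite (big_setD1 _ Hv) /x' eqxx.
  have -> : \sum_(i in S :\ v) A j i * (if i == v then t else x i) = \sum_(i in S') A j i * x i.
    by apply: eq_bigr => i; rewrite in_setD1 => /andP [/negbTE -> _].
  move=> H2; move: (Ht j); rewrite /r => H1.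
  have H3 : A j v * t + \sum_(i in S') A j i * x i + b j < 0 := H2.
  move: H1 H3; rewrite addrA; apply: lt_le_asym2.
have [lam' [Hlam'0 [Hlam'S Hlam'b]]] := IH S' J' A' b' HS' Hinf'.
have Hc : forall k, incone A b (A' k) (b' k).
  case=> [[p q]|j]; rewrite /A' /b' /=.
  - case: ifP => Hc.
      have /andP [Hp Hq] := Hc.
      exists (fun k => (k == p)%:R * (- A q v) + (k == q)%:R * A p v); split; [|split].
      + move=> k; apply: addr_ge0; apply: mulr_ge0; rewrite ?ler0n //; lra.
      + move=> i; under eq_bigr do rewrite mulrDl -!mulrA.
        by rewrite big_split /= !sum_ind ?Hc.
      + under eq_bigr do rewrite mulrDl -!mulrA.
        by rewrite big_split /= !sum_ind ?Hc.
    exists (fun _ => 0); split; [by []|split].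
    + by move=> i; rewrite big1 // => k _; rewrite mul0r.
    + by rewrite big1 // => k _; rewrite mul0r.
  - case: ifP => _.
      exists (fun k => (k == j)%:R); split; [by move=> k; rewrite ler0n|split].
      + by move=> i; rewrite sum_ind.
      + by rewrite sum_ind.
    exists (fun _ => 0); split; [by []|split].
    + by move=> i; rewrite big1 // => k _; rewrite mul0r.
    + by rewrite big1 // => k _; rewrite mul0r.
have [lam [Hl0 [HlA Hlb]]] := cone_comb Hc Hlam'0.
exists lam; split; [by []|split].
- move=> i Hi; rewrite HlA.
  case: (eqVneq i v) => [->|Hiv].
    apply: big1 => k _; case: k => [[p q]|j] /=.
    + by case: ifP => _; [ring | rewrite mulr0].
    + by case: ifP => [/eqP -> |_]; rewrite mulr0.
  apply: Hlam'S; by rewrite in_setD1 Hiv Hi.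
- by rewrite Hlb.
Qed.

Lemma farkas (S : {set X}) (J : finType) (A : J -> X -> R) (b : J -> R) :
  (forall x : X -> R, exists j, \sum_(i in S) A j i * x i + b j < 0) ->
  Farkas_concl S A b.
Proof. exact: farkas_n. Qed.

End Farkas.


Lemma sum_unit (F : unit -> rat) : \sum_(u : unit) F u = F tt.
Proof. by rewrite (bigD1 tt) //= big1 ?addr0 // => -[]. Qed.

Lemma sum_ind_in (T : finType) (S : {pred T}) (a : T) (f : T -> rat) :
  \sum_(i in S) (i == a)%:R * f i = if a \in S then f a else 0.
Proof.
rewrite big_mkcond /=.
transitivity (\sum_i (i == a)%:R * (if i \in S then f i else 0)).
  by apply: eq_bigr => i _; case: (i \in S); rewrite ?mulr0.
by rewrite (@sum_ind _ _ a).
Qed.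

Lemma lam_identity (X J : finType) (S : {set X}) (A : J -> X -> rat) (b : J -> rat)
  (lam : J -> rat) (x : X -> rat) :
  (forall i, i \in S -> \sum_j lam j * A j i = 0) ->
  \sum_j lam j * (\sum_(i in S) A j i * x i + b j) = \sum_j lam j * b j.
Proof.
move=> H.
under eq_bigr do rewrite mulrDr.
rewrite big_split /=.
suff -> : \sum_j lam j * (\sum_(i in S) A j i * x i) = 0 by rewrite add0r.
under eq_bigr do rewrite mulr_sumr.
rewrite exchange_big /=; apply: big1 => i Hi.
under eq_bigr do rewrite mulrA.
by rewrite -mulr_suml H // mul0r.
Qed.

Section Dual.
Variables (V : finType) (I : PCSTP V) (Ut : {set {set V' I}}) (L : rat).
Hypothesis HL : lp_opt_value Ut L.

Let X := (V' I * V' I)%type.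
Let J := (({set V' I} + (X + X)) + unit)%type.

Definition Arow (eps : rat) (j : J) (i : X) : rat :=
  match j with
  | inl (inl U) => if (U \in Ut) && (i \in delta_in U) then 1 else 0
  | inl (inr (inl a)) => (i == a)%:R
  | inl (inr (inr a)) => - (i == a)%:R
  | inr _ => - cst' i.1 i.2
  end.

Definition brow (eps : rat) (j : J) : rat :=
  match j with
  | inl (inl U) => if U \in Ut then -1 else 0
  | inl (inr (inl a)) => 0
  | inl (inr (inr a)) => 1
  | inr _ => L + Mbig I - eps
  end.

Lemma sum_delta (U : {set V' I}) (x : X -> rat) :
  \sum_(i in arcs I) (if i \in delta_in U then 1 else 0) * x i = \sum_(i in delta_in U) x i.
Proof.
transitivity (\sum_(i in arcs I | i \in delta_in U) x i).
  rewrite big_mkcondr; apply: eq_bigr => i _; case: ifP => _; by rewrite ?mul1r ?mul0r.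
apply: eq_bigl => i; rewrite /delta_in !in_set; by case: (arcb _ _).
Qed.

Lemma row_val eps j (x : X -> rat) :
  \sum_(i in arcs I) Arow eps j i * x i + brow eps j =
  match j with
  | inl (inl U) => if U \in Ut then \sum_(i in delta_in U) x i - 1 else 0
  | inl (inr (inl a)) => if a \in arcs I then x a else 0
  | inl (inr (inr a)) => if a \in arcs I then 1 - x a else 1
  | inr _ => L - eps - lp_obj x
  end.
Proof.
case: j => [[U|[a|a]]|u] /=.
- case: ifP => HU /=.
    by rewrite sum_delta.
  by rewrite big1 ?addr0 // => i _; rewrite mul0r.
- by rewrite addr0 sum_ind_in.
- under eq_bigr do rewrite mulNr.
  rewrite sumrN sum_ind_in; case: ifP => _; by rewrite ?oppr0 ?add0r // addrC.
- rewrite /lp_obj.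
  under eq_bigr do rewrite mulNr.
  rewrite sumrN; lra.
Qed.

Lemma dual_eps eps : 0 < eps ->
  exists pi' sigma', dual_feasible Ut pi' sigma' /\ L - eps < dual_obj Ut pi' sigma'.
Proof.
move=> Heps.
have Hinf : forall x : X -> rat, exists j, \sum_(i in arcs I) Arow eps j i * x i + brow eps j < 0.
  move=> x; case: (boolP [exists j, \sum_(i in arcs I) Arow eps j i * x i + brow eps j < 0]) =>
     [/existsP //| /existsPn Hall]; exfalso.
  have Hall' : forall j, 0 <= \sum_(i in arcs I) Arow eps j i * x i + brow eps j.
    by move=> j; move: (Hall j); rewrite -leNgt.
  have Hfeas : lp_feasible Ut x.
    split.
    + move=> U HU; move: (Hall' (inl (inl U))); rewrite row_val HU; lra.
    + move=> a Ha; move: (Hall' (inl (inr (inl a)))) (Hall' (inl (inr (inr a))));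
        rewrite !row_val Ha => H1 H2; apply/andP; split; lra.
  have := HL.2 x Hfeas; move: (Hall' (inr tt)); rewrite row_val; lra.
have [lam [Hl0 [HlS Hlb]]] := farkas Hinf.
set kap := lam (inr tt).
have Hkap : 0 < kap.
  rewrite lt_neqAle Hl0 andbT; apply/negP => /eqP Hk0.
  have [[x0 [Hf0 Ho0]] _] := HL.
  have := @lam_identity _ _ _ _ _ _ x0 HlS.
  move=> Hid; move: Hlb; rewrite -Hid => Hlt.
  suff : 0 <= \sum_j lam j * (\sum_(i in arcs I) Arow eps j i * x0 i + brow eps j) by lra.
  apply: sumr_ge0 => j _; rewrite row_val.
  case: j => [[U|[a|a]]|u].
  - case: ifP => HU; rewrite ?mulr0 //; apply: mulr_ge0 => //; have := Hf0.1 U HU; lra.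
  - case: ifP => Ha; rewrite ?mulr0 //; apply: mulr_ge0 => //; have := Hf0.2 a Ha; case/andP; lra.
  - case: ifP => Ha; apply: mulr_ge0 => //; have := Hf0.2 a Ha; case/andP; lra.
  - by case: u; rewrite -/kap -Hk0 mul0r.
exists (fun U => lam (inl (inl U)) / kap), (fun a => lam (inl (inr (inr a))) / kap).
have Hcoef : forall a, a \in arcs I ->
  \sum_(U in Ut | a \in delta_in U) lam (inl (inl U)) + lam (inl (inr (inl a)))
   - lam (inl (inr (inr a))) = kap * cst' a.1 a.2.
  move=> a Ha; have := HlS a Ha.
  rewrite big_sumType /= big_sumType /= big_sumType /= sum_unit /=.
  have E1 : \sum_i lam (inl (inr (inl i))) * (a == i)%:R = lam (inl (inr (inl a))).
    rewrite (bigD1 a) //= eqxx mulr1 big1 ?addr0 // => i.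
    by rewrite eq_sym => /negbTE ->; rewrite mulr0.
  have E2 : \sum_i lam (inl (inr (inr i))) * (1 *- (a == i)) = - lam (inl (inr (inr a))).
    rewrite (bigD1 a) //= eqxx mulr1n mulrN1 big1 ?addr0 // => i.
    by rewrite eq_sym => /negbTE ->; rewrite mulr0n oppr0 mulr0.
  rewrite E1 E2.
  have -> : \sum_i lam (inl (inl i)) * (if (i \in Ut) && (a \in delta_in i) then 1 else 0) =
            \sum_i (if i \in Ut then (if a \in delta_in i then lam (inl (inl i)) else 0) else 0).
    by apply: eq_bigr => U _; case: (U \in Ut); case: (a \in delta_in U); rewrite /= ?mulr1 ?mulr0.
  rewrite -big_mkcond /= -big_mkcondr /= -/kap; lra.
split; [split|].
- by move=> U _; apply: divr_ge0 => //; apply: ltW.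
- move=> a Ha; split; first by apply: divr_ge0 => //; apply: ltW.
  have := Hcoef a Ha => Hc.
  rewrite -mulr_suml.
  have E : (\sum_(U in Ut | a \in delta_in U) lam (inl (inl U))) / kap - lam (inl (inr (inr a))) / kap
        = cst' a.1 a.2 - lam (inl (inr (inl a))) / kap.
    have Hc' : \sum_(U in Ut | a \in delta_in U) lam (inl (inl U)) - lam (inl (inr (inr a)))
       = kap * cst' a.1 a.2 - lam (inl (inr (inl a))) by lra.
    rewrite -mulrBl Hc'; field; by rewrite gt_eqF.
  rewrite E; have : 0 <= lam (inl (inr (inl a))) / kap by apply: divr_ge0 => //; apply: ltW.
  lra.
- rewrite /dual_obj -!mulr_suml.
  move: Hlb; rewrite big_sumType /= big_sumType /= big_sumType /= sum_unit /= -/kap.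
  have -> : \sum_i lam (inl (inr (inl i))) * 0 = 0 by rewrite big1 // => i _; rewrite mulr0.
  have -> : \sum_i lam (inl (inr (inr i))) * 1 = \sum_i lam (inl (inr (inr i))).
    by apply: eq_bigr => i _; rewrite mulr1.
  have -> : \sum_i lam (inl (inl i)) * (if i \in Ut then -1 else 0) =
            - \sum_(U in Ut) lam (inl (inl U)).
    rewrite -sumrN [RHS]big_mkcond /=; apply: eq_bigr => U _; case: (U \in Ut); by rewrite ?mulrN1 ?mulr0 ?oppr0.
  move=> Hlb.
  have Hsub : \sum_(a in arcs I) lam (inl (inr (inr a))) <= \sum_a lam (inl (inr (inr a))).
    rewrite [X in _ <= X](bigID (fun a => a \in arcs I)) /= lerDl.
    by apply: sumr_ge0 => a _.
  have H1 : L + Mbig I - eps < (\sum_(U in Ut) lam (inl (inl U)) - \sum_a lam (inl (inr (inr a)))) / kap.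
    rewrite ltr_pdivlMr //; lra.
  have H2 : (\sum_(U in Ut) lam (inl (inl U)) - \sum_a lam (inl (inr (inr a)))) / kap <=
            (\sum_(U in Ut) lam (inl (inl U))) / kap - (\sum_(a in arcs I) lam (inl (inr (inr a)))) / kap.
    rewrite mulrBl lerD2l lerN2; apply: ler_wpM2r => //; rewrite invr_ge0; apply: ltW.
  lra.
lra.
Qed.

End Dual.


Lemma sum_Tp (V : finType) (I : PCSTP V) (Q : pred V) (f : V -> rat) :
  \sum_(t : Tp I | Q (val t)) f (val t) = \sum_(v | (0 < pr I v) && Q v) f v.
Proof.
symmetry.
rewrite (reindex_omap (val : Tp I -> V) insub); last first.
  by move=> i /andP[iA Pi]; rewrite insubT.
apply: eq_bigl=> -[i iA] /=; by rewrite insubT ?iA /= eqxx andbT.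
Qed.

Lemma crossing (T : finType) (e : rel T) (U : {set T}) r z :
  r \notin U -> z \in U -> connect e r z -> exists a b, [&& e a b, a \notin U & b \in U].
Proof.
move=> Hr Hz /connectP [p Hp Hz'].
elim: p r Hr Hp Hz' => [|y p IH] r Hr /=; first by move=> _ Hz'; rewrite -Hz' Hz in Hr.
case/andP => Hry Hp Hlast.
case: (boolP (y \in U)) => Hy; first by exists r, y; rewrite Hry Hr Hy.
exact: IH Hy Hp Hlast.
Qed.



Section Dist.
Variables (V : finType) (I : PCSTP V) (VS : {set V}) (ES : {set V * V}).
Hypothesis Htree : is_tree I VS ES.
Variable r0 : V.
Hypothesis Hr0 : r0 \in VS.

Definition erel : rel V := fun x y => (x, y) \in ES.

Definition Pd (v : V) (n : nat) : bool :=
  ~~ connect erel r0 v || [exists p : n.-tuple V, path erel r0 p && (last r0 p == v)].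

Lemma Pd_ex v : exists n, Pd v n.
Proof.
case: (boolP (connect erel r0 v)) => Hc; last by exists 0%N; rewrite /Pd Hc.
case/connectP: Hc => p Hp Hl; exists (size p).
apply/orP; right; apply/existsP; exists (in_tuple p); by rewrite /= Hp -Hl eqxx.
Qed.

Definition dist v := ex_minn (Pd_ex v).

Lemma Pd_tuple v (s : seq V) : path erel r0 s -> last r0 s = v -> Pd v (size s).
Proof. move=> Hp Hl; apply/orP; right; apply/existsP; exists (in_tuple s); by rewrite /= Hp Hl eqxx. Qed.

Lemma dist_min v (s : seq V) : path erel r0 s -> last r0 s = v -> (dist v <= size s)%N.
Proof. move=> Hp Hl; rewrite /dist; case: ex_minnP => m _ Hm; apply: Hm; exact: Pd_tuple. Qed.

Lemma dist_r0 : dist r0 = 0%N.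
Proof. by apply/eqP; rewrite -leqn0 (@dist_min r0 [::]). Qed.

Lemma dist_path v : connect erel r0 v -> exists2 s, path erel r0 s & last r0 s = v /\ size s = dist v.
Proof.
move=> Hc; rewrite /dist; case: ex_minnP => m Hm _.
move: Hm; rewrite /Pd Hc /= => /existsP [p /andP [Hp /eqP Hl]].
by exists (tval p) => //; rewrite size_tuple.
Qed.

Lemma parent v : v \in VS -> v != r0 -> exists u, (u, v) \in ES /\ (dist u).+1 = dist v.
Proof.
move=> Hv Hvr.
have Hc : connect erel r0 v by case: Htree => _ _ H _; apply: H.
have [s Hp [Hl Hs]] := dist_path Hc.
move: Hp Hl Hs; case/lastP: s => [|s' y] /=.
  by move=> _ Hl; rewrite Hl eqxx in Hvr.
rewrite rcons_path last_rcons size_rcons => /andP [Hp' He] Hy Hs; subst y.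
exists (last r0 s'); split; first exact: He.
have H1 := dist_min Hp' (erefl _).
have Hcu : connect erel r0 (last r0 s') by apply/connectP; exists s'.
have [q Hq [Hql Hqs]] := dist_path Hcu.
have H2 : (dist v <= size (rcons q v))%N.
  apply: dist_min; by rewrite ?rcons_path ?Hq ?Hql ?last_rcons.
rewrite size_rcons Hqs in H2.
lia.
Qed.

End Dist.

Lemma sum4 (a b c d a' c' d' : rat) : a = a' -> b = 0 -> c = c' -> d = d' -> a + b + (c + d) = a' + c' + d'.
Proof. by move=> -> -> -> ->; rewrite addr0 addrA. Qed.

Section Arb.
Variables (V : finType) (I : PCSTP V) (VS : {set V}) (ES : {set V * V}).
Hypothesis Htree : is_tree I VS ES.
Variable r0 : V.
Hypotheses (Hr0 : r0 \in VS) (Hpr0 : 0 < pr I r0).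
Variable par : V -> V.
Hypothesis Hpar : forall v, v \in VS -> v != r0 ->
  (par v, v) \in ES /\ (dist ES r0 (par v)).+1 = dist ES r0 v.

Definition xb (a b : V' I) : bool :=
  match a, b with
  | inr true, inl (inl t) => t == r0
  | inl (inl u), inl (inl v) => [&& v \in VS, v != r0 & u == par v]
  | inl (inl t), inr false => t == r0
  | inl (inl t), inl (inr t') => (t == val t') && (t \in VS)
  | inr false, inl (inr t') => val t' \notin VS
  | _, _ => false
  end.

Definition xarb (a : V' I * V' I) : rat := (xb a.1 a.2)%:R.

Definition Fr : rel (V' I) := fun a b => arcb a b && xb a b.

Lemma es_prop a : a \in ES -> [/\ adj I a.1 a.2, a.1 \in VS, a.2 \in VS & (a.2, a.1) \in ES].
Proof. by case: Htree => _ H _ _; apply: H. Qed.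

Lemma reach_orig n : forall v, dist ES r0 v = n -> v \in VS -> connect Fr (root' I) (orig I v).
Proof.
elim: n => [|n IH] v Hd Hv.
  case: (eqVneq v r0) => [->|Hvr].
    by apply: connect1; rewrite /Fr /= Hpr0 eqxx.
  by have [_ ] := Hpar Hv Hvr; rewrite Hd.
case: (eqVneq v r0) => [Hvr|Hvr].
  by rewrite Hvr dist_r0 in Hd.
have [He Hdu] := Hpar Hv Hvr.
have [Hadj Hu _ _] := es_prop He.
apply: connect_trans (IH (par v) _ Hu) _.
  by move: Hdu; rewrite Hd => -[].
apply: connect1; by rewrite /Fr /= Hadj Hv Hvr eqxx.
Qed.

Lemma reach_term (t : Tp I) : connect Fr (root' I) (tprime t).
Proof.
case: (boolP (val t \in VS)) => Ht.
  apply: connect_trans (reach_orig (erefl _) Ht) _.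
  by apply: connect1; rewrite /Fr /= eqxx Ht.
apply: connect_trans (reach_orig (erefl _) Hr0) _.
apply: (@connect_trans _ _ (v0' I)); apply: connect1; by rewrite /Fr /= ?Hpr0 ?eqxx ?Ht.
Qed.

Lemma xarb_feas (Ut : {set {set V' I}}) :
  (forall U, U \in Ut -> root' I \notin U /\ U :&: terminals' I != set0) ->
  lp_feasible Ut xarb.
Proof.
move=> HUt; split; last first.
  move=> a _; rewrite /xarb; case: (xb _ _); by rewrite ?ler01 ?lexx.
move=> U HU; have [Hr Hne] := HUt U HU.
have [z] := set0Pn _ Hne; rewrite in_setI => /andP [Hz Hzt].
have Hc : connect Fr (root' I) z.
  move: Hzt Hz; rewrite /terminals' in_set.
  case: z => [[v|t]|[|]] //= _ Hz.
  - exact: reach_term.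
have [a [b /and3P [Hab Ha Hb]]] := crossing Hr Hz Hc.
have Hd : (a, b) \in delta_in U.
  rewrite /delta_in !in_set /=; by move: Hab => /andP [-> _]; rewrite Hb Ha.
rewrite (bigD1 (a, b)) //= /xarb /=.
move: Hab => /andP [_ ->]; rewrite /= lerDl; apply: sumr_ge0 => i _; case: (xb _ _); by rewrite ?ler01 ?lexx.
Qed.

Lemma xarb_one (t : Tp I) : val t \notin VS -> xarb (v0' I, tprime t) = 1.
Proof. by move=> Ht; rewrite /xarb /= Ht. Qed.

Lemma cost_eq : \sum_(a in arcs I) cst' a.1 a.2 * xarb a =
  \sum_(v in VS | v != r0) cst I (par v) v + Mbig I + \sum_(t : Tp I | val t \notin VS) pr I (val t).
Proof.
have E : \sum_(a in arcs I) cst' a.1 a.2 * xarb a =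
   \sum_(a1 : V' I) \sum_(a2 : V' I) (if arcb a1 a2 then cst' a1 a2 * (xb a1 a2)%:R else 0).
  rewrite pair_bigA big_mkcond /=; apply: eq_bigr => -[a1 a2] _; by rewrite /arcs in_set.
have T1 : forall i : V, \sum_(a2 : V' I) (if arcb (orig I i) a2 then cst' (orig I i) a2 * (xb (orig I i) a2)%:R else 0)
   = \sum_(w : V) (if adj I i w then cst I i w * ([&& w \in VS, w != r0 & i == par w])%:R else 0).
  move=> i; rewrite big_sumType /= big_sumType /= big_bool /=.
  rewrite [X in _ + X + _]big1 => [|t _]; last by rewrite mul0r if_same.
  by rewrite mul0r if_same !addr0.
have T2 : forall t : Tp I, \sum_(a2 : V' I) (if arcb (tprime t) a2 then cst' (tprime t) a2 * (xb (tprime t) a2)%:R else 0) = 0.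
  by move=> t; apply: big1 => a2 _; case: a2 => [[?|?]|[|]].
have T3 : \sum_(a2 : V' I) (if arcb (root' I) a2 then cst' (root' I) a2 * (xb (root' I) a2)%:R else 0) = Mbig I.
  rewrite big_sumType /= big_sumType /= big_bool /=.
  rewrite [X in _ + X + _]big1 // addr0 addr0 (bigD1 r0) //= Hpr0 eqxx mulr1 big1 ?addr0 // => t /negbTE ->.
  by rewrite mulr0 if_same.
have T4 : \sum_(a2 : V' I) (if arcb (v0' I) a2 then cst' (v0' I) a2 * (xb (v0' I) a2)%:R else 0) =
    \sum_(t : Tp I | val t \notin VS) pr I (val t).
  rewrite big_sumType /= big_sumType /= big_bool /=.
  rewrite big1 // add0r addr0 [RHS]big_mkcond /=; apply: eq_bigr => t _.
  by case: (val t \in VS); rewrite /= ?mulr0 ?mulr1.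
have T1' : \sum_(i : V) \sum_(w : V) (if adj I i w then cst I i w * ([&& w \in VS, w != r0 & i == par w])%:R else 0)
    = \sum_(v in VS | v != r0) cst I (par v) v.
  rewrite exchange_big /= [RHS]big_mkcond /=; apply: eq_bigr => w _.
  case: (boolP ((w \in VS) && (w != r0))) => [/andP [Hw Hwr]|Hn].
    rewrite (bigD1 (par w)) //= Hw Hwr eqxx /=.
    have [He _] := Hpar Hw Hwr; have [Hadj _ _ _] := es_prop He.
    rewrite Hadj mulr1 big1 ?addr0 // => i /negbTE Hi; by rewrite Hi mulr0 if_same.
  apply: big1 => i _; move: Hn; case: (w \in VS); case: (w != r0) => //= _; by rewrite mulr0 if_same.
rewrite E big_sumType big_sumType big_bool.
apply: sum4.
- rewrite -T1'; apply: eq_bigr => i _; exact: T1 i.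
- apply: big1 => t _; exact: T2 t.
- exact: T3.
- exact: T4.
Qed.

Lemma par_sum_le (Hsym : forall v w, cst I v w = cst I w v)
  (Hpos : forall v w, adj I v w -> 0 < cst I v w) :
  \sum_(v in VS | v != r0) cst I (par v) v <= (\sum_(a in ES) cst I a.1 a.2) / 2%:R.
Proof.
set D := [set v in VS | v != r0].
have HD : forall v, v \in D -> (par v, v) \in ES /\ (dist ES r0 (par v)).+1 = dist ES r0 v.
  by move=> v; rewrite in_set => /andP [Hv Hvr]; apply: Hpar.
set Im := [set (par v, v) | v in D].
set Rv := [set (v, par v) | v in D].
have E1 : \sum_(v in VS | v != r0) cst I (par v) v = \sum_(a in Im) cst I a.1 a.2.
  rewrite big_imset /=; last by move=> v w _ _ [].
  by apply: eq_big => // v; rewrite /D in_set.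
have E2 : \sum_(v in VS | v != r0) cst I (par v) v = \sum_(a in Rv) cst I a.1 a.2.
  rewrite big_imset /=; last by move=> v w _ _ [].
  by apply: eq_big => // v; rewrite /D in_set.
have HImES : Im \subset ES by apply/subsetP => a /imsetP [v Hv ->]; case: (HD v Hv).
have HRvES : Rv \subset ES.
  apply/subsetP => a /imsetP [v Hv ->]; have [He _] := HD v Hv; by case: (es_prop He).
have Hdisj : forall a, a \in Rv -> a \notin Im.
  move=> a /imsetP [v Hv ->]; apply/negP => /imsetP [w Hw [E3 E4]].
  have [_ Hdv] := HD v Hv; have [_ Hdw] := HD w Hw.
  move: Hdv Hdw; rewrite E4 -E3; lia.
have Hge : forall A : {set V * V}, A \subset ES -> 0 <= \sum_(a in A) cst I a.1 a.2.
  move=> A HA; apply: sumr_ge0 => a Ha; have [Hadj _ _ _] := es_prop (subsetP HA a Ha).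
  exact: ltW (Hpos _ _ Hadj).
rewrite (big_setID (A := ES) Im) /= (setIidPr HImES) (big_setID (A := ES :\: Im) Rv) /=.
have -> : (ES :\: Im) :&: Rv = Rv.
  apply/setIidPr/subsetP => a Ha; rewrite in_setD (Hdisj a Ha) (subsetP HRvES a Ha).
  done.
have := Hge ((ES :\: Im) :\: Rv); rewrite -E1 -E2.
move=> H; have H' := H (subset_trans (subsetDl _ _) (subsetDl _ _)).
set s1 := \sum_(v in VS | v != r0) cst I (par v) v.
set s2 := \sum_(i in (ES :\: Im) :\: Rv) cst I i.1 i.2.
rewrite ler_pdivlMr ?ltr0n //.
move: H'; rewrite -/s2 => H''.
lra.
Qed.

End Arb.


Lemma dual_ge (V : finType) (I : PCSTP V) (Ut : {set {set V' I}}) (L : rat)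
  (HL : lp_opt_value Ut L) pi sigma
  (Hopt : forall pi' sigma', dual_feasible Ut pi' sigma' ->
      dual_obj Ut pi' sigma' <= dual_obj Ut pi sigma) :
  L <= dual_obj Ut pi sigma.
Proof.
rewrite leNgt; apply/negP => HD.
have Heps : 0 < (L - dual_obj Ut pi sigma) / 2%:R by apply: divr_gt0; lra.
have [pi' [sigma' [Hf Hlt]]] := dual_eps HL Heps.
have := Hopt _ _ Hf.
set D := dual_obj Ut pi sigma.
move: Hlt; set D' := dual_obj Ut pi' sigma'.
set e := (L - D) / 2%:R.
have He : e * 2%:R = L - D by rewrite /e; field.
move=> H1 H2.
have key : forall (L D D' e : rat), D < L -> e * 2 = L - D -> L - e < D' -> D' <= D -> False.
  move=> L0 D0 D0' e0 *; lra.
exact: key HD He H1 H2.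
Qed.

Lemma le_add2 (a b d : rat) : 0 <= b -> 0 <= d -> a <= a + b + d.
Proof. move=> *; lra. Qed.

Lemma weak_red (V : finType) (I : PCSTP V) (Ut : {set {set V' I}}) (x : V' I * V' I -> rat)
  (Hx : lp_feasible Ut x) pi sigma (Hd : dual_feasible Ut pi sigma)
  (K : {set V' I * V' I}) (HK : K \subset arcs I) (HK1 : forall a, a \in K -> x a = 1) :
  \sum_(a in K) red_cost Ut pi a + dual_obj Ut pi sigma <= lp_obj x.
Proof.
case: Hx => Hxc Hxb; case: Hd => Hpi Hsig.
set s := fun a : V' I * V' I => \sum_(U in Ut | a \in delta_in U) pi U.
have E1 : \sum_(a in arcs I) cst' a.1 a.2 * x a =
   \sum_(a in arcs I) red_cost Ut pi a * x a + \sum_(a in arcs I) s a * x a.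
  rewrite -big_split /=; apply: eq_bigr => a _; rewrite /red_cost -mulrDl; congr (_ * _).
  by rewrite /s subrK.
have E2 : \sum_(U in Ut) pi U <= \sum_(a in arcs I) s a * x a.
  rewrite /s.
  have -> : \sum_(a in arcs I) (\sum_(U in Ut | a \in delta_in U) pi U) * x a =
            \sum_(U in Ut) pi U * \sum_(a in delta_in U) x a.
    under eq_bigr do rewrite mulr_suml big_mkcondr.
    rewrite exchange_big /=; apply: eq_bigr => U HU.
    rewrite -sum_delta mulr_sumr; apply: eq_bigr => a _.
    by case: (a \in delta_in U); rewrite ?mul1r ?mul0r ?mulr0.
  apply: ler_sum => U HU; rewrite -[X in X <= _]mulr1; apply: ler_wpM2l; [exact: Hpi|exact: Hxc].
have E3 : \sum_(a in K) red_cost Ut pi a - \sum_(a in arcs I) sigma a <=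
          \sum_(a in arcs I) red_cost Ut pi a * x a.
  have Hf : forall a, a \in arcs I -> 0 <= red_cost Ut pi a + sigma a.
    move=> a Ha; have [_ H] := Hsig a Ha; rewrite /red_cost; lra.
  have E4 : \sum_(a in arcs I) red_cost Ut pi a * x a =
     \sum_(a in arcs I) (red_cost Ut pi a + sigma a) * x a - \sum_(a in arcs I) sigma a * x a.
    rewrite -sumrB; apply: eq_bigr => a _; by rewrite [in RHS]mulrDl addrK.
  have E5 : \sum_(a in arcs I) sigma a * x a <= \sum_(a in arcs I) sigma a.
    apply: ler_sum => a Ha; rewrite -[X in _ <= X]mulr1; apply: ler_wpM2l.
      by case: (Hsig a Ha).
    by case/andP: (Hxb a Ha).
  have E6 : \sum_(a in K) red_cost Ut pi a <= \sum_(a in arcs I) (red_cost Ut pi a + sigma a) * x a.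
    rewrite (big_setID (A := arcs I) K) /= (setIidPr HK).
    have -> : \sum_(a in K) (red_cost Ut pi a + sigma a) * x a = \sum_(a in K) (red_cost Ut pi a + sigma a).
      by apply: eq_bigr => a Ha; rewrite HK1 // mulr1.
    have E7 : \sum_(a in K) (red_cost Ut pi a + sigma a) = \sum_(a in K) red_cost Ut pi a + \sum_(a in K) sigma a.
      by rewrite big_split.
    rewrite E7.
    have H1 : 0 <= \sum_(a in K) sigma a.
      apply: sumr_ge0 => a Ha; by case: (Hsig a (subsetP HK a Ha)).
    have H2 : 0 <= \sum_(a in arcs I :\: K) (red_cost Ut pi a + sigma a) * x a.
      apply: sumr_ge0 => a; rewrite in_setD => /andP [_ Ha]; apply: mulr_ge0; first exact: Hf.
      by case/andP: (Hxb a Ha).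
    exact: le_add2 H1 H2.
  rewrite E4; lra.
rewrite /lp_obj /dual_obj E1; lra.
Qed.

Lemma exists_root (V : finType) (I : PCSTP V) (Hwf : pcstp_wf I) VS ES
  (Hopt : is_optimal I VS ES) t (Ht : 0 < pr I t) : exists2 r0, r0 \in VS & 0 < pr I r0.
Proof.
have [[_ _ Hcsym Hcpos Hprnn] _] := Hwf.
case: (boolP [exists r, (r \in VS) && (0 < pr I r)]) => [/existsP [r /andP [H1 H2]]|/existsPn Hn].
  by exists r.
exfalso.
have Ht1 : is_tree I [set t] set0.
  split.
  - by apply/set0Pn; exists t; rewrite in_set1.
  - by move=> a; rewrite in_set0.
  - by move=> u v /set1P -> /set1P ->; exact: connect0.
  - case=> s [_ Hs Hc]; move: Hs Hc; case: s => [|x [|y s]] //= _; by rewrite in_set0.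
have := Hopt.2 _ _ Ht1; rewrite /tree_cost big_set0 mul0r add0r => Hle.
have E1 : \sum_(v in ~: VS) pr I v = \sum_v pr I v.
  rewrite big_mkcond /=; apply: eq_bigr => v _; rewrite in_setC.
  case: (boolP (v \in VS)) => //= Hv.
  have := Hn v; rewrite Hv /= => H; apply/eqP; rewrite eq_sym eq_le Hprnn andbT.
  by rewrite leNgt.
have E2 : \sum_v pr I v = pr I t + \sum_(v in ~: [set t]) pr I v.
  rewrite (bigD1 t) //=; congr (_ + _); apply: eq_big => // v; by rewrite in_setC in_set1.
have E3 : 0 <= (\sum_(a in ES) cst I a.1 a.2) / 2%:R.
  apply: divr_ge0 => //; apply: sumr_ge0 => a Ha.
  have [_ H _ _] := Hopt.1; have [Hadj _ _ _] := H a Ha; exact: ltW (Hcpos _ _ Hadj).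
move: Hle; rewrite E1 E2; lra.
Qed.

Lemma cost_le (V : finType) (I : PCSTP V) (Hwf : pcstp_wf I) VS ES
  (Htree : is_tree I VS ES) r0 (Hr0 : r0 \in VS) (Hpr0 : 0 < pr I r0) par
  (Hpar : forall v, v \in VS -> v != r0 ->
     (par v, v) \in ES /\ (dist ES r0 (par v)).+1 = dist ES r0 v) :
  lp_obj (xarb (I := I) VS r0 par) <= tree_cost I VS ES.
Proof.
have [[_ _ Hcsym Hcpos Hprnn] _] := Hwf.
rewrite /lp_obj (cost_eq Htree Hpr0 Hpar) /tree_cost.
have H1 := par_sum_le Htree Hr0 Hpr0 Hpar Hcsym Hcpos.
have H2 : \sum_(t : Tp I | val t \notin VS) pr I (val t) <= \sum_(v in ~: VS) pr I v.
  rewrite (@sum_Tp _ _ (fun v => v \notin VS)).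
  rewrite big_mkcond [X in _ <= X]big_mkcond /=; apply: ler_sum => v _; rewrite in_setC.
  case: (0 < pr I v); case: (v \in VS) => /=. all: try done.
lra.
Qed.

Lemma chain5 (S L D o t B : rat) : B < S + L -> S + D <= o -> L <= D -> o <= t -> t <= B -> False.
Proof. move=> *; lra. Qed.

Unset Implicit Arguments.
Set Strict Implicit.

Theorem proposition6 (V : finType) (I : PCSTP V) (Hwf : pcstp_wf I)
    (Ut : {set {set V' I}})
    (HUt : forall U, U \in Ut -> root' I \notin U /\ U :&: terminals' I != set0)
    (L : rat) (HL : lp_opt_value Ut L)
    (pi : {set V' I} -> rat) (Hpi : dual_optimal_pi Ut pi)
    (B : rat) (HB : forall VS ES, is_optimal I VS ES -> tree_cost I VS ES <= B)
    (ti : V) (Hti : 0 < pr I ti)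
    (Tbar : {set V}) (HTbar : forall t, t \in Tbar -> 0 < pr I t)
    (Himpl : forall VS ES, is_optimal I VS ES -> VS :&: Tbar != set0 -> ti \in VS)
    (Hgt : \sum_(tj : Tp I | val tj \in Tbar) red_cost Ut pi (v0' I, tprime tj) + L > B) :
  forall VS ES, is_optimal I VS ES -> ti \in VS.
Proof.
move=> VS ES Hopt.
case: (boolP (ti \in VS)) => // Hnot; exfalso.
have HT : forall t, t \in Tbar -> t \notin VS.
  move=> t Ht; apply/negP => HtV; move: Hnot; rewrite (Himpl VS ES Hopt) //.
  by apply/set0Pn; exists t; rewrite in_setI HtV Ht.
have [r0 Hr0 Hpr0] := exists_root Hwf Hopt Hti.
have Htree := Hopt.1.
have [par Hpar] : exists par : V -> V, forall v, v \in VS -> v != r0 ->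
     (par v, v) \in ES /\ (dist ES r0 (par v)).+1 = dist ES r0 v.
  have Hex : forall v : V, exists u : V, v \in VS -> v != r0 ->
     (u, v) \in ES /\ (dist ES r0 u).+1 = dist ES r0 v.
    move=> v; case: (boolP ((v \in VS) && (v != r0))) => [/andP [Hv Hvr]|Hn].
      have [u Hu] := parent Htree Hr0 Hv Hvr; by exists u.
    by exists v => Hv Hvr; move: Hn; rewrite Hv Hvr.
  exact: fin_all_exists Hex.
set x := xarb (I := I) VS r0 par.
have Hfeas : lp_feasible Ut x := xarb_feas Htree Hr0 Hpr0 Hpar HUt.
have [sigma [Hdf Hdopt]] := Hpi.
have HLD := dual_ge HL Hdopt.
set K := [set (v0' I, tprime tj) | tj in [set tj : Tp I | val tj \in Tbar]].
have HK : K \subset arcs I by apply/subsetP => a /imsetP [tj _ ->]; rewrite in_set.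
have HK1 : forall a, a \in K -> x a = 1.
  move=> a /imsetP [tj Htj ->]; apply: xarb_one; apply: HT; by move: Htj; rewrite in_set.
have Hw := weak_red Hfeas Hdf HK HK1.
have EK : \sum_(a in K) red_cost Ut pi a = \sum_(tj : Tp I | val tj \in Tbar) red_cost Ut pi (v0' I, tprime tj).
  rewrite big_imset /=; last by move=> t1 t2 _ _ [] ->.
  by apply: eq_big => // tj; rewrite in_set.
have Hc := cost_le Hwf Htree Hr0 Hpr0 Hpar.
have HBo := HB VS ES Hopt.
rewrite EK in Hw.
exact: chain5 Hgt Hw HLD Hc HBo.
Qed.
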